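(* Let $G$ be a Frobenius group whose Frobenius kernel $N$ is elementary abelian of order $p^2$ ($p$ prime) and whose Frobenius complement $C$ has prime order $q$. Then: (1) if $q\nmid p-1$, then $G\in\mathcal{D}_{\frac{p+1}{q}+1}$; (2) if $q\mid p-1$, then either $G\in\mathcal{D}_{p+2}$ (and this always happens when $q=2$) or $G\in\mathcal{D}_{\frac{p-1}{q}+3}$.
   Context: $\mathcal{D}(G)$ denotes the number of conjugacy classes of nontrivial subgroups $H$ of the finite group $G$ with $N_G(H)\neq H$; $\mathcal{D}_n$ is the family of finite groups $G$ with $\mathcal{D}(G)=n$. *)

(* Defs.v *)
From mathcomp Require Import all_boot all_fingroup all_solvable.
Set Implicit Arguments. Unset Strict Implicit. Unset Printing Implicit Defensive.
Local Open Scope group_scope.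

Definition nonselfnorm_subgroups (gT : finGroupType) (G : {set gT}) : {set {set gT}} :=
  [set H : {set gT} | [&& group_set H, H \subset G, H != 1 & 'N_G(H) != H]].

Definition Dcount (gT : finGroupType) (G : {set gT}) : nat :=
  #|[set H :^: G | H in nonselfnorm_subgroups G]|.

(* Main.v *)
Require Import Defs.
From mathcomp Require Import all_boot all_fingroup all_solvable zify.
Set Implicit Arguments. Unset Strict Implicit. Unset Printing Implicit Defensive.
Local Open Scope group_scope.

Lemma A1 D q p : 1 < q -> (D * q = p.+2 + (q - 1) * p.+2)%N -> D = (p + 2)%N.
Proof. move=> q1 e2. have [le|lt] := leqP D (p+2); nia. Qed.
Lemma A2 D q p : 1 < q -> (D * q = p.+2 + (q - 1) * 1)%N -> D = ((p.+1) %/ q).+1.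
Proof.
move=> q1 B. have e : p.+1 = (D.-1 * q)%N by nia.
have D0 : 0 < D by nia.
by rewrite e mulnK ?prednK // ltnW.
Qed.
Lemma A3 D q p t : 2 < q -> (p.-1 = q * t)%N -> 0 < p -> (D * q = p.+2 + (q - 1) * 1)%N -> False.
Proof. move=> q1 e p0 e2. have [le|lt] := leqP D t.+1; nia. Qed.
Lemma A4 D q p t : 2 < q -> (p.-1 = q * t)%N -> 0 < p -> (D * q = p.+2 + (q - 1) * 2)%N -> False.
Proof. move=> q1 e p0 e2. have [le|lt] := leqP D t.+2; nia. Qed.
Lemma A5 D q p t : 2 < q -> (p.-1 = q * t)%N -> 0 < p -> (D * q = p.+2 + (q - 1) * 3)%N -> D = (p.-1 %/ q + 3)%N.
Proof. move=> q1 e p0 e2. rewrite e mulKn; last by nia. have [le|lt] := leqP D (t+3); nia. Qed.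

Section Main.
Variables (gT : finGroupType) (G N C : {group gT}) (p q : nat).
Hypotheses (pr_p : prime p) (pr_q : prime q) (frobG : [Frobenius G = N ><| C])
  (abN : p.-abelem N) (oN : #|N| = (p ^ 2)%N) (oC : #|C| = q).

Let defG : N ><| C = G. Proof. by case: (Frobenius_context frobG). Qed.
Let nsNG : N <| G. Proof. by case: (sdprod_context defG). Qed.
Let sNG : N \subset G. Proof. by case/andP: nsNG. Qed.
Let nNG : G \subset 'N(N). Proof. by case/andP: nsNG. Qed.
Let sCG : C \subset G. Proof. by case: (sdprod_context defG). Qed.
Let cNN : abelian N. Proof. exact: abelem_abelian abN. Qed.
Let oG : #|G| = (p ^ 2 * q)%N. Proof. by rewrite -(sdprod_card defG) oN oC. Qed.
Let iGN : #|G : N| = q. Proof. by rewrite -divgS // oG oN mulKn // expn_gt0 prime_gt0. Qed.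

Lemma cent1_triv y : y \in G -> y \notin N -> 'C_N[y] = 1.
Proof.
move=> Gy notNy; apply/trivgP/subsetP=> k /setIP[Nk cky].
apply: contraR notNy => ntk; apply/negPn.
have: y \in 'C_G[k] by rewrite inE Gy cent1C.
move=> Hy; have Nk1 : k \in N^# by move: ntk; rewrite !inE Nk andbT.
rewrite negbK; exact: (subsetP (Frobenius_cent1_ker frobG Nk1)).
Qed.

Lemma join_all (H : {group gT}) : H \subset G -> ~~ (H \subset N) -> N * H = G.
Proof.
move=> sHG nsHN.
have nNH : H \subset 'N(N) := subset_trans sHG nNG.
have sKG : N <*> H \subset G by rewrite join_subG sNG.
have sNK : N \subset N <*> H := joing_subl _ _.
have := Lagrange_index sKG sNK; rewrite iGN => eq.
have : #|N <*> H : N| %| q by rewrite -eq dvdn_mull.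
case/primeP: pr_q => _ /[apply] /orP[] /eqP e.
  have := index1g sNK e => eK; case/negP: nsHN; rewrite eK; exact: joing_subr.
rewrite -norm_joinEr //; apply/eqP; rewrite eqEcard sKG /=.
rewrite -(Lagrange sNK) e -iGN Lagrange //.
Qed.

Lemma commN y n : y \in G -> n \in N -> [~ y, n] \in N.
Proof.
move=> Gy Nn; rewrite commgEr groupMr // memJ_norm ?groupV //.
exact: (subsetP nNG).
Qed.

Lemma commN_inj y : y \in G -> y \notin N -> {in N &, injective (fun n => [~ y, n])}.
Proof.
move=> Gy nNy a b Na Nb /= eab.
have Nd : b * a^-1 \in N by rewrite groupM ?groupV.
have e1 : [~ y, b] = [~ y, a] * [~ y, b * a^-1].
  rewrite -{1}(mulgVK a b) commgMJ; congr (_ * _).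
  apply/conjg_fixP/commgP; exact: (centsP cNN _ (commN Gy Nd) _ Na).
have cd : [~ y, b * a^-1] = 1.
  by move: e1; rewrite -eab -{1}(mulg1 [~ y, a]) => /mulgI <-.
have : b * a^-1 \in 'C_N[y].
  rewrite inE Nd /=; apply/cent1P/commgP.
  by rewrite -invgR cd invg1.
by rewrite cent1_triv // inE -eq_mulgV1 => /eqP ->.
Qed.

Lemma selfnorm (H : {group gT}) : H \subset G -> ~~ (H \subset N) -> 'N_G(H) = H.
Proof.
move=> sHG nsHN.
have [y Hy nNy] := subsetPn nsHN.
have Gy : y \in G := subsetP sHG y Hy.
have f_H0 : [set [~ y, h] | h in H :&: N] = H :&: N.
  apply/eqP; rewrite eqEcard card_in_imset; last first.
    by apply: sub_in2 (commN_inj Gy nNy) => x /setIP[].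
  rewrite leqnn andbT; apply/subsetP => _ /imsetP[h /setIP[Hh Nh] ->].
  by rewrite inE groupR // commN.
have nNH : N :&: 'N(H) \subset H.
  apply/subsetP => n /setIP[Nn nHn].
  have : [~ y, n] \in H :&: N.
    rewrite inE commN // andbT commgEl groupM ?groupV //.
    by rewrite memJ_norm.
  rewrite -f_H0 => /imsetP[h /setIP[Hh Nh] e].
  by rewrite (commN_inj Gy nNy Nn Nh e).
apply/eqP; rewrite eqEsubset andbC subsetI sHG normG /=.
apply/subsetP => m /setIP[Gm nHm].
rewrite -(join_all sHG nsHN) in Gm; case/mulsgP: Gm => n h Nn Hh em.
have : n \in H.
  apply: (subsetP nNH); rewrite inE Nn /=.
  have -> : n = m * h^-1 by rewrite em mulgK.
  by rewrite groupM ?groupV // (subsetP (normG H)).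
by move=> Hn; rewrite em groupM.
Qed.

Let neGN : G != N :> {set gT}.
Proof.
apply/eqP => eGN; have := oG; rewrite eGN oN => /eqP.
rewrite -{1}(muln1 (p ^ 2)%N) eqn_pmul2l ?expn_gt0 ?prime_gt0 //.
by rewrite eq_sym gtn_eqF // prime_gt1.
Qed.

Lemma sNnormX (X : {set gT}) : X \subset N -> N \subset 'N(X).
Proof. by move=> sXN; apply: cents_norm; apply: subset_trans cNN (centS sXN). Qed.

Lemma memS X : (X \in nonselfnorm_subgroups G) = [&& group_set X, X \subset N & X != 1].
Proof.
rewrite inE; apply/idP/idP.
  case/and4P => gX sXG ntX nX; rewrite gX ntX andbT /=.
  apply: contraR nX => nsXN; rewrite ?negbK; apply/eqP.
  by have := selfnorm (H := Group gX) sXG nsXN; rewrite /= => ->.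
case/and3P => gX sXN ntX; rewrite gX ntX (subset_trans sXN sNG) /=.
have [eXN | neXN] := eqVneq X N.
  by rewrite eXN (setIidPl nNG).
apply: contraNneq neXN => eNX.
have : N \subset 'N_G(X) by rewrite subsetI sNG sNnormX.
rewrite eNX => sNX; by apply/eqP/setP/subset_eqP; rewrite sXN.
Qed.

Let ntN : N != 1 :> {set gT}. Proof. by case: (Frobenius_context frobG). Qed.
Let p_gt1 : 1 < p. Proof. exact: prime_gt1. Qed.
Let q_gt1 : 1 < q. Proof. exact: prime_gt1. Qed.

Definition Lset := [set X : {set gT} | [&& group_set X, X \subset N & #|X| == p]].

Lemma S_eq : nonselfnorm_subgroups G = gval N |: Lset.
Proof.
apply/setP => X; rewrite memS !inE.
have [-> | neXN] := eqVneq X N; first by rewrite groupP subxx ntN.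
rewrite /=; case gX: (group_set X) => //=; case sXN: (X \subset N) => //=.
have := cardSg (H := Group gX) sXN; rewrite oN /= => /(dvdn_pfactor _ _ pr_p)[m].
case: m => [|[|[|m]]] // _ oX.
- have X1 : X = 1 :> {set gT}.
    have : (#|Group gX| == 1)%N by rewrite /= oX.
    by rewrite -trivg_card1 => /eqP.
  by rewrite X1 eqxx cards1 eq_sym gtn_eqF.
- rewrite oX expn1 eqxx; apply/eqP => X1; move: oX; rewrite X1 cards1 expn1.
  by move=> e; move: p_gt1; rewrite -e.
- by case/eqP: neXN; apply/eqP; rewrite eqEcard sXN oN oX leqnn.
Qed.

Lemma card_L : #|Lset| = p.+1.
Proof.
have NE2 : N \in 'E_p^2(N) by apply/pnElemP; split => //; rewrite oN pfactorK.
rewrite -(card_p1Elem_p2Elem NE2).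
suff -> : Lset = [set gval X | X in 'E_p^1(N)].
  by rewrite card_imset //; exact: val_inj.
apply/setP => X; rewrite p1ElemE // inE; apply/idP/imsetP.
  move=> /and3P[gX sXN oX]. apply: (ex_intro2 _ _ (Group gX)); last by [].
  by rewrite !inE /= sXN.
move=> [H]; rewrite !inE => /andP[sHN oH] ->; rewrite sHN oH !andbT; by case: H {sHN oH}.

Qed.

Lemma card_S : #|nonselfnorm_subgroups G| = p.+2.
Proof.
rewrite S_eq cardsU1 card_L inE oN.
have -> : (p ^ 2 == p)%N = false by rewrite -{2}(expn1 p) eqn_exp2l.
by rewrite !andbF.
Qed.

Definition Sfix := [set X in nonselfnorm_subgroups G | G \subset 'N(X)].

Lemma conjS X g : g \in G -> X \in nonselfnorm_subgroups G ->
  X :^ g \in nonselfnorm_subgroups G.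
Proof.
move=> Gg; rewrite !memS => /and3P[gX sXN ntX].
rewrite conjsg_eq1 ntX andbT.
have -> : group_set (X :^ g) by exact: (valP (Group gX :^ g)%G).
by rewrite -(normP (subsetP nNG g Gg)) conjSg.
Qed.

Lemma acts_S : [acts G, on nonselfnorm_subgroups G | 'Js].
Proof.
apply/actsP => g Gg X /=; apply/idP/idP; last exact: conjS.
by move/(conjS (groupVr Gg)); rewrite conjsgK.
Qed.

Lemma fixN a : a \in N -> 'Fix_(nonselfnorm_subgroups G | 'Js)[a] = nonselfnorm_subgroups G.
Proof.
move=> Na; apply/setIidPl/subsetP => X SX; apply/afix1P => /=.
apply/normP; apply: (subsetP (sNnormX _)) Na.
by move: SX; rewrite memS => /and3P[].
Qed.

Lemma fixGN a : a \in G :\: N -> 'Fix_(nonselfnorm_subgroups G | 'Js)[a] = Sfix.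
Proof.
case/setDP => Ga nNa; apply/setP => X; rewrite in_setI [X \in Sfix]inE.
case SX: (X \in nonselfnorm_subgroups G) => //=.
have sXN : X \subset N by move: SX; rewrite memS => /and3P[].
apply/idP/idP.
  move/afix1P; rewrite /= => /normP nXa.
  rewrite -(join_all (H := <[a]>%G)) ?cycle_subG //=.
  by rewrite mul_subG ?sNnormX // cycle_subG.
by move=> nXG; apply/afix1P/normP; apply: (subsetP nXG).
Qed.

Lemma burnside : (Dcount G * q = p.+2 + (q - 1) * #|Sfix|)%N.
Proof.
have := Frobenius_Cauchy acts_S.
rewrite (big_setID N) /= (setIidPr sNG).
rewrite (eq_bigr (fun _ => p.+2)); last by move=> a Na; rewrite fixN // card_S.
rewrite [X in _ + X](eq_bigr (fun _ => #|Sfix|)); last by move=> a Na; rewrite fixGN.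
rewrite !sum_nat_const cardsD (setIidPr sNG) oG oN.
rewrite -/(Dcount G).
have P0 : (0 < p ^ 2)%N by rewrite expn_gt0 prime_gt0.
rewrite -[X in _ - X]muln1 -mulnBr -mulnA -mulnDr mulnCA => /eqP.
by rewrite eqn_pmul2l // => /eqP <-.
Qed.

Lemma powN c (X : {group gT}) :
  (forall x, x \in N -> x ^ c \in <[x]>) -> X \subset N -> c \in 'N(X).
Proof.
move=> powc sXN; apply/normP/eqP; rewrite eqEcard cardJg leqnn andbT.
apply/subsetP => _ /imsetP[x Xx ->].
by apply: (subsetP _ _ (powc x (subsetP sXN x Xx))); rewrite cycle_subG.
Qed.

Lemma gen_line (P : {group gT}) a : #|P| = p -> a \in P -> a != 1 -> <[a]> = P.
Proof.
move=> oP Pa nta; apply/eqP; rewrite eqEcard cycle_subG Pa oP /=.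
have : #[a] %| p by rewrite -oP order_dvdG.
case/primeP: pr_p => _ /[apply] /orP[] /eqP oa; last by rewrite -orderE oa.
by move: nta; rewrite -order_eq1 oa.
Qed.

Lemma TI_lines (P1 P2 : {group gT}) : #|P1| = p -> #|P2| = p -> P1 != P2 :> {set gT} ->
  P1 :&: P2 = 1.
Proof.
move=> o1 o2 ne; apply: prime_TIg; first by rewrite o1.
apply: contra ne => s12; rewrite eqEcard s12 o1 o2 leqnn.
by [].
Qed.

Lemma pow_cyc (P : {group gT}) a c k : <[a]> = P -> a ^ c = a ^+ k ->
  forall u, u \in P -> u ^ c = u ^+ k.
Proof.
move=> <- eac u /cycleP[i ->].
by rewrite conjXg eac -!expgM mulnC.
Qed.

Lemma scalar c (P1 P2 P3 : {group gT}) :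
  P1 \subset N -> P2 \subset N -> P3 \subset N ->
  #|P1| = p -> #|P2| = p -> #|P3| = p ->
  c \in 'N(P1) -> c \in 'N(P2) -> c \in 'N(P3) ->
  P1 != P2 :> {set gT} -> P1 != P3 :> {set gT} -> P2 != P3 :> {set gT} ->
  forall x, x \in N -> x ^ c \in <[x]>.
Proof.
move=> s1 s2 s3 o1 o2 o3 n1 n2 n3 ne12 ne13 ne23.
have ti12 := TI_lines o1 o2 ne12.
have ti13 := TI_lines o1 o3 ne13.
have ti23 := TI_lines o2 o3 ne23.
have defN : P1 * P2 = N.
  apply/eqP; rewrite eqEcard mul_subG //= TI_cardMg // o1 o2 oN.
  by rewrite mulnn leqnn.
have comN : forall u v, u \in N -> v \in N -> commute u v.
  by move=> u v Nu Nv; apply: (centsP cNN u Nu v Nv).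
have ntP3 : P3 != 1 :> {set gT}.
  by apply/eqP => e; move: o3; rewrite e cards1 => e1; move: p_gt1; rewrite -e1.
have [x3 P3x nt3] := trivgPn _ ntP3.
have : x3 \in P1 * P2 by rewrite defN (subsetP s3).
case/mulsgP => a b P1a P2b ex3.
have nta : a != 1.
  apply: contraNneq nt3 => a1.
  have : x3 \in P2 :&: P3 by rewrite inE P3x andbT ex3 a1 mul1g.
  by rewrite ti23 inE.
have ntb : b != 1.
  apply: contraNneq nt3 => b1.
  have : x3 \in P1 :&: P3 by rewrite inE P3x andbT ex3 b1 mulg1.
  by rewrite ti13 inE.
have ga := gen_line o1 P1a nta.
have gb := gen_line o2 P2b ntb.
have gx := gen_line o3 P3x nt3.
have [k1 e1] : exists k, a ^ c = a ^+ k.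
  by apply/cycleP; rewrite ga memJ_norm.
have [k2 e2] : exists k, b ^ c = b ^+ k.
  by apply/cycleP; rewrite gb memJ_norm.
have [k3 e3] : exists k, x3 ^ c = x3 ^+ k.
  by apply/cycleP; rewrite gx memJ_norm.
have Na : a \in N := subsetP s1 a P1a.
have Nb : b \in N := subsetP s2 b P2b.
have E : a ^+ k1 * b ^+ k2 = a ^+ k3 * b ^+ k3.
  by rewrite -e1 -e2 -conjMg -ex3 e3 ex3 expgMn //; apply: comN.
have ew : (a ^+ k3)^-1 * a ^+ k1 = b ^+ k3 * (b ^+ k2)^-1.
  rewrite -[a ^+ k1](mulgK (b ^+ k2)) E.
  by rewrite !mulgA mulVg mul1g.
have w1 : (a ^+ k3)^-1 * a ^+ k1 = 1.
  have : (a ^+ k3)^-1 * a ^+ k1 \in P1 :&: P2.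
    rewrite inE groupM ?groupV ?groupX //=.
    by rewrite ew groupM ?groupV ?groupX.
  by rewrite ti12 inE => /eqP.
have ea : a ^ c = a ^+ k3.
  by rewrite e1; apply/esym/eqP; rewrite eq_mulVg1 w1.
have eb : b ^ c = b ^+ k3.
  rewrite e2; apply/esym/eqP; rewrite eq_mulgV1 -ew w1 //.
move=> x; rewrite -defN => /mulsgP[u v P1u P2v ->].
rewrite conjMg (pow_cyc ga ea) // (pow_cyc gb eb) // -expgMn ?mem_cycle //.
by apply: comN; [apply: (subsetP s1) | apply: (subsetP s2)].
Qed.

Lemma all_fixed : (forall c x, c \in C -> x \in N -> x ^ c \in <[x]>) -> #|Sfix| = p.+2.
Proof.
move=> powC; suff -> : Sfix = nonselfnorm_subgroups G by exact: card_S.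
apply/setP => X; rewrite inE.
case SX: (X \in nonselfnorm_subgroups G) => //=.
move: SX; rewrite memS => /and3P[gX sXN _].
rewrite -(sdprodW defG) mul_subG ?sNnormX //.
by apply/subsetP => c Cc; apply: (powN (X := Group gX)) => // x Nx; apply: powC.
Qed.

Lemma fix_i : ~~ (q %| p.-1) -> #|Sfix| = 1%N.
Proof.
move=> ndvd; suff -> : Sfix = [set gval N] by rewrite cards1.
apply/setP => X; rewrite inE S_eq !inE.
have [-> | neXN] := eqVneq X N; first by rewrite /= nNG.
rewrite /=; apply/negbTE/negP => /andP[/and3P[gX sXN oX] nXG].
have ntX : (Group gX : {set gT}) != 1.
  apply/eqP => X1; move: oX; rewrite -[X]/(gval (Group gX)) X1 cards1 eq_sym.
  by rewrite gtn_eqF.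
have frob := Frobenius_subl ntX sXN (subset_trans sCG nXG) frobG.
by move: (Frobenius_dvd_ker1 frob); rewrite oC /= (eqP oX) (negbTE ndvd).
Qed.

Lemma fix_ii : q = 2%N -> #|Sfix| = p.+2.
Proof.
move=> q2; apply: all_fixed => c x Cc Nx.
have [-> | ntc] := eqVneq c 1; first by rewrite conjg1 cycle_id.
have Gc : c \in G := subsetP sCG c Cc.
have nNc : c \notin N.
  apply: contra ntc => Nc; have [_ _ _ tiNC] := sdprodP defG.
  have : c \in N :&: C by rewrite inE Nc Cc.
  by rewrite tiNC inE.
have cc : c * c = 1 by rewrite -(expg_cardG Cc) oC q2 expgS expg1.
have nNc' : c \in 'N(N) := subsetP nNG c Gc.
have Nxc : x ^ c \in N by rewrite memJ_norm.
have y1 : x * x ^ c = 1.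
  have : x * x ^ c \in 'C_N[c].
    rewrite inE groupM //=; apply/cent1P/commgP/conjg_fixP.
    rewrite conjMg -conjgM cc conjg1.
    exact: (centsP cNN _ Nxc _ Nx).
  by rewrite cent1_triv // inE => /eqP.
have -> : x ^ c = x^-1 by rewrite -(mulKg x (x ^ c)) y1 mulg1.
by rewrite groupV cycle_id.
Qed.

Lemma fix_line X : X \in Sfix -> X != N ->
  exists2 P : {group gT}, X = P & [/\ P \subset N, #|P| = p & G \subset 'N(P)].
Proof.
rewrite inE S_eq !inE => /andP[/orP[/eqP -> | /and3P[gX sXN oX]] nXG] neXN.
  by rewrite eqxx in neXN.
by exists (Group gX) => //; split => //; apply/eqP.
Qed.

Lemma N_Sfix : gval N \in Sfix.
Proof. by rewrite inE S_eq !inE eqxx nNG. Qed.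

Lemma Sfix_le : #|Sfix| <= p.+2.
Proof.
rewrite -card_S subset_leq_card //; apply/subsetP => X; rewrite inE.
by case/andP.
Qed.

Lemma three_fixed : 3 < #|Sfix| -> #|Sfix| = p.+2.
Proof.
move=> F4; set T := Sfix :\ gval N.
have cT : #|T| = #|Sfix|.-1 by rewrite (cardsD1 (gval N) Sfix) N_Sfix.
have [X1 T1] : exists X1, X1 \in T by apply/set0Pn; rewrite -card_gt0 cT; move: F4; case: #|Sfix| => [|[|[|[|]]]].
have cT1 : #|T :\ X1| = #|T|.-1 by rewrite (cardsD1 X1 T) T1.
have [X2 T2] : exists X2, X2 \in T :\ X1 by apply/set0Pn; rewrite -card_gt0 cT1 cT; move: F4; case: #|Sfix| => [|[|[|[|]]]].
have cT2 : #|T :\ X1 :\ X2| = #|T :\ X1|.-1 by rewrite (cardsD1 X2 (T :\ X1)) T2.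
have [X3 T3] : exists X3, X3 \in T :\ X1 :\ X2.
  by apply/set0Pn; rewrite -card_gt0 cT2 cT1 cT; move: F4; case: #|Sfix| => [|[|[|[|]]]].
move: T3 T2 T1; rewrite !in_setD1 => /and3P[ne32 ne31 /andP[neN3 F3]].
move=> /andP[ne21 /andP[neN2 F2]] /andP[neN1 F1].
have [P1 e1 [s1 o1 n1]] := fix_line F1 neN1.
have [P2 e2 [s2 o2 n2]] := fix_line F2 neN2.
have [P3 e3 [s3 o3 n3]] := fix_line F3 neN3.
apply: all_fixed => c x Cc Nx.
have Gc := subsetP sCG c Cc.
apply: (scalar (P1 := P1) (P2 := P2) (P3 := P3)) => //.
- exact: (subsetP n1).
- exact: (subsetP n2).
- exact: (subsetP n3).
- by rewrite -e1 -e2 eq_sym.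
- by rewrite -e1 -e3 eq_sym.
- by rewrite -e2 -e3 eq_sym.
Qed.

Lemma final :
  (~~ (q %| p.-1)%N -> Dcount G = ((p.+1) %/ q).+1) /\
  ((q %| p.-1)%N ->
     (Dcount G = p + 2 \/ Dcount G = (p.-1 %/ q) + 3) /\
     (q = 2 -> Dcount G = p + 2)).
Proof.
have B := burnside.
have F1 : 0 < #|Sfix| by rewrite card_gt0; apply/set0Pn; exists (gval N); exact: N_Sfix.
have Fle := Sfix_le.
have p0 : 0 < p := ltnW p_gt1.
move: B F1 Fle (fix_i) (fix_ii) (three_fixed).
set D := Dcount G; set F := #|Sfix| => B F1 Fle fi fii f3.
have qD : F = p.+2 -> D = (p + 2)%N by move=> eF; rewrite eF in B; exact: A1 q_gt1 B.
split.
  by move=> nd; rewrite (fi nd) in B; exact: A2 q_gt1 B.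
move=> dv; case: (eqVneq q 2) => [q2 | nq2].
  by have := qD (fii q2) => ->; split; [left|].
split; last by move=> e; rewrite e eqxx in nq2.
have [t et] : exists t, p.-1 = (q * t)%N by case/dvdnP: dv => t ->; exists t; rewrite mulnC.
have q3 : 2 < q by move: q_gt1 nq2; case: (q) => [|[|[|]]].
have [lt3 | ge4] := leqP F 3; last by left; apply: qD; apply: f3.
right.
clear Fle qD f3 fi fii; move: F1 lt3; case: F B => [|[|[|[|]]]] // B _ _.
- by case: (A3 q3 et p0 B).
- by case: (A4 q3 et p0 B).
- exact: A5 q3 et p0 B.
Qed.
End Main.

Theorem mainTheorem9 (gT : finGroupType) (G N C : {group gT}) (p q : nat) :
  prime p -> prime q ->
  [Frobenius G = N ><| C] ->
  p.-abelem N -> #|N| = (p ^ 2)%N ->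
  #|C| = q ->
  (~~ (q %| p.-1)%N -> Dcount G = ((p.+1) %/ q).+1) /\
  ((q %| p.-1)%N ->
     (Dcount G = p + 2 \/ Dcount G = (p.-1 %/ q) + 3) /\
     (q = 2 -> Dcount G = p + 2)).
Proof. move=> pr_p pr_q frobG abN oN oC; exact: (final pr_p pr_q frobG abN oN oC). Qed.
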